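(* Let $G$ be a graph and $k\in\mathbb N$. Let $\tau$ be a regular, non-principal $\mathcal P'_k$-tangle of $S_k(G)$, and let $\sigma\subseteq\vec S_k(G)$ be a finite star with finite interior. Then $\sigma\not\subseteq\tau$.
   Context: Graphs may be infinite. A separation of $G$ is a set $\{A,B\}$ with $A,B\subseteq V(G)$, $A\cup B=V(G)$ and no edge of $G$ between $A\setminus B$ and $B\setminus A$; its order is $|A\cap B|$. $S_k(G)$ is the set of separations of order $<k$ and $\vec S_k(G)$ the set of their orientations $(A,B)$, $(B,A)$. Order: $(A,B)\le(C,D)$ iff $A\subseteq C$ and $B\supseteq D$. An orientation of $S_k(G)$ is a set containing exactly one orientation of each element; it is consistent if there are no distinct $\{A,B\},\{C,D\}\in S_k(G)$ with $(A,B)<(C,D)$, $(B,A)\in O$, $(C,D)\in O$; regular if it contains no separation of the form $(V(G),A)$; principal if for every set $X$ of fewer than $k$ vertices it contains $(V(G)\setminus V(K),V(K)\cup X)$ for some component $K$ of $G-X$ (non-principal otherwise). A star is a set $\sigma$ of oriented finite-order separations, not containing $(V(G),V(G))$, with $(A,B)\le(D,C)$ for distinct $(A,B),(C,D)\in\sigma$; its interior is $\mathrm{int}(\sigma)=\bigcap_{(A,B)\in\sigma}B$. $\mathcal P'_k$ is the set of all $\rho=\{(A,B),(B\cap C,A\cup D),(B\cap D,A\cup C)\}\subseteq\vec S_k(G)$ with $(A,B),(C,D)\in\vec S_k(G)$ and $|\mathrm{int}(\rho)|<k$. A $\mathcal P'_k$-tangle of $S_k(G)$ is a consistent orientation of $S_k(G)$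 containing no element of $\mathcal P'_k$ as a subset. *)

(* Defs.v *)
(* Graphs may be infinite: a graph is a vertex type V with an
   adjacency relation adj (assumed symmetric and irreflexive in the theorem). *)
From Stdlib Require Import List.
Import ListNotations.
Set Implicit Arguments.

Definition vset (V : Type) := V -> Prop.
Definition osep (V : Type) := (vset V * vset V)%type.

Section Defs.
Variable V : Type.
Variable adj : V -> V -> Prop.

Definition vsetT : vset V := fun _ => True.
Definition vsetI (A B : vset V) : vset V := fun x => A x /\ B x.
Definition vsetU (A B : vset V) : vset V := fun x => A x \/ B x.
Definition vsetC (A : vset V) : vset V := fun x => ~ A x.
Definition vsubset (A B : vset V) : Prop := forall x, A x -> B x.

Definition finite_set {T : Type} (S : T -> Prop) : Prop :=
  exists l : list T, forall x, S x <-> In x l.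
Definition card_lt {T : Type} (S : T -> Prop) (k : nat) : Prop :=
  exists l : list T, NoDup l /\ (forall x, S x <-> In x l) /\ length l < k.

Definition is_sep (A B : vset V) : Prop :=
  (forall v, A v \/ B v) /\
  (forall u v, A u -> ~ B u -> B v -> ~ A v -> ~ adj u v /\ ~ adj v u).

Definition vSk (k : nat) (s : osep V) : Prop :=
  is_sep (fst s) (snd s) /\ card_lt (vsetI (fst s) (snd s)) k.

Definition fin_osep (s : osep V) : Prop :=
  is_sep (fst s) (snd s) /\ finite_set (vsetI (fst s) (snd s)).

Definition sep_le (s t : osep V) : Prop := vsubset (fst s) (fst t) /\ vsubset (snd t) (snd s).
Definition sep_lt (s t : osep V) : Prop := sep_le s t /\ s <> t.
Definition inv (s : osep V) : osep V := ((snd s), (fst s)).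

(* the unoriented separations {A,B} and {C,D} are distinct *)
Definition distinct_usep (s t : osep V) : Prop := s <> t /\ s <> inv t.

Definition is_orientation (k : nat) (O : osep V -> Prop) : Prop :=
  (forall s, O s -> vSk k s) /\
  (forall s, vSk k s -> (O s \/ O (inv s)) /\ (O s -> O (inv s) -> s = inv s)).

Definition consistent (k : nat) (O : osep V -> Prop) : Prop :=
  ~ exists s t, vSk k s /\ vSk k t /\ distinct_usep s t /\
      sep_lt s t /\ O (inv s) /\ O t.

Definition regular (O : osep V -> Prop) : Prop :=
  forall A, ~ O (vsetT, A).

Inductive reach (X : vset V) (x : V) : V -> Prop :=
| reach_refl : ~ X x -> reach X x x
| reach_step : forall y z, reach X x y -> adj y z -> ~ X z -> reach X x z.

Definition component (X K : vset V) : Prop :=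
  exists x, ~ X x /\ forall y, K y <-> reach X x y.

Definition principal (k : nat) (O : osep V -> Prop) : Prop :=
  forall X : vset V, card_lt X k ->
    exists K, component X K /\ O (vsetC K, vsetU K X).

Definition star (sigma : osep V -> Prop) : Prop :=
  (forall s, sigma s -> fin_osep s) /\
  ~ sigma (vsetT, vsetT) /\
  (forall s t, sigma s -> sigma t -> s <> t -> sep_le s (inv t)).

Definition interior (sigma : osep V -> Prop) : vset V :=
  fun x => forall s, sigma s -> (snd s) x.

(* O contains no element of P'_k as a subset *)
Definition avoids_P'k (k : nat) (O : osep V -> Prop) : Prop :=
  forall A B C D : vset V,
    vSk k (A, B) -> vSk k (C, D) ->
    vSk k (vsetI B C, vsetU A D) -> vSk k (vsetI B D, vsetU A C) ->
    card_lt (vsetI B (vsetI (vsetU A D) (vsetU A C))) k ->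
    ~ (O (A, B) /\ O (vsetI B C, vsetU A D) /\ O (vsetI B D, vsetU A C)).

Definition P'k_tangle (k : nat) (O : osep V -> Prop) : Prop :=
  is_orientation k O /\ consistent k O /\ avoids_P'k k O.
End Defs.

(* Main.v *)
Require Import Defs.
From Stdlib Require Import List.
From Stdlib Require Import Classical FunctionalExtensionality PropExtensionality Lia.
Import ListNotations.

Section Proof.
Variable V : Type.
Variable adj : V -> V -> Prop.
Variable adj_sym : forall u v, adj u v -> adj v u.
Variable k : nat.
Variable tau : osep V -> Prop.
Hypothesis Htang : P'k_tangle adj k tau.
Hypothesis Hreg : regular tau.

Lemma ext_set (A B : vset V) : (forall v, A v <-> B v) -> A = B.
Proof. intro H; apply functional_extensionality; intro v;
  apply propositional_extensionality; apply H. Qed.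

Lemma card_filter (S : V -> Prop) : forall l : list V, NoDup l ->
  exists l', NoDup l' /\ (forall x, In x l' <-> In x l /\ S x).
Proof.
  induction l as [|a l IH]; intro Hn.
  - exists []; split; [constructor|]. simpl; tauto.
  - inversion Hn; subst. destruct (IH H2) as [l' [Hn' Hi]].
    destruct (classic (S a)) as [Sa|nSa].
    + exists (a :: l'); split.
      * constructor; auto. intro Hin; apply Hi in Hin; tauto.
      * intro x; simpl; rewrite Hi. split.
        { intros [<-|H]; tauto. }
        { intros [[<-|H] Hs]; tauto. }
    + exists l'; split; auto. intro x; simpl; rewrite Hi. split.
      { tauto. }
      { intros [[<-|H] Hs]; tauto. }
Qed.

Lemma card_sub (X S : vset V) (n : nat) : card_lt X n -> (forall v, S v -> X v) -> card_lt S n.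
Proof.
  intros [l [Hn [Hi Hl]]] Hs.
  destruct (card_filter S l Hn) as [l' [Hn' Hi']].
  exists l'; split; auto; split.
  - intro x; rewrite Hi'; rewrite <- Hi; split; [intro; split; auto | tauto].
  - assert (length l' <= length l).
    { apply NoDup_incl_length; auto. intros x Hx; apply Hi' in Hx; tauto. }
    lia.
Qed.

Lemma sep_sym A B : is_sep adj A B -> is_sep adj B A.
Proof. intros [H1 H2]; split.
  - intro v; destruct (H1 v); tauto.
  - intros u v Hu Hu' Hv Hv'. destruct (H2 v u Hv Hv' Hu Hu'); tauto. Qed.

Lemma vSk_inv s : vSk adj k s -> vSk adj k (inv s).
Proof. destruct s as [A B]; intros [H1 H2]; split; simpl in *.
  - apply sep_sym; auto.
  - eapply card_sub; [exact H2|]. intros v [? ?]; split; auto. Qed.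

Lemma sep_meet A B C D : is_sep adj A B -> is_sep adj C D ->
  is_sep adj (vsetI B C) (vsetU A D).
Proof.
  intros [c1 e1] [c2 e2]; split.
  - intro v; unfold vsetI, vsetU. destruct (c1 v); destruct (c2 v); tauto.
  - unfold vsetI, vsetU; intros u v [Bu Cu] nu Hv nv.
    assert (nAu : ~ A u) by tauto. assert (nDu : ~ D u) by tauto.
    destruct (classic (A v)) as [Av|nAv].
    + destruct (classic (B v)) as [Bv|nBv].
      * assert (nCv : ~ C v) by tauto.
        assert (Dv : D v) by (destruct (c2 v); tauto).
        destruct (e2 u v Cu nDu Dv nCv); tauto.
      * destruct (e1 v u Av nBv Bu nAu); tauto.
    + assert (Dv : D v) by tauto.
      destruct (classic (C v)) as [Cv|nCv].
      * assert (nBv : ~ B v) by tauto.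
        assert (Av : A v) by (destruct (c1 v); tauto). tauto.
      * destruct (e2 u v Cu nDu Dv nCv); tauto.
Qed.

Lemma no_self C D : tau (C, D) -> tau (D, C) -> False.
Proof.
  intros H1 H2. destruct Htang as [[Ho1 Ho2] _].
  assert (Hv := Ho1 _ H1). destruct (Ho2 _ Hv) as [_ Hb].
  specialize (Hb H1 H2). unfold inv in Hb; simpl in Hb. injection Hb; intros E1 E2.
  destruct Hv as [[c _] _]; simpl in c.
  assert (EC : C = (@vsetT V)).
  { apply ext_set; intro v; unfold vsetT; split; auto. intros _.
    destruct (c v); auto. rewrite E2; auto. }
  rewrite EC in H1. exact (Hreg _ H1).
Qed.

Lemma sup X A B C D : card_lt X k -> vSk adj k (A, B) -> vSk adj k (C, D) ->
  tau (A, B) -> tau (C, D) ->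
  (forall v, A v -> B v -> X v) -> (forall v, B v -> C v -> D v -> X v) ->
  tau (vsetU A C, vsetI B D) /\ vSk adj k (vsetU A C, vsetI B D) /\
  (forall v, vsetU A C v -> vsetI B D v -> X v).
Proof.
  intros HX HvAB HvCD HtAB HtCD HAB HBCD.
  destruct Htang as [[Ho1 Ho2] [Hcons Hav]].
  assert (H1 : vSk adj k (vsetI B C, vsetU A D)).
  { split; simpl. apply sep_meet; [apply HvAB | apply HvCD].
    eapply card_sub; [exact HX|]. unfold vsetI, vsetU; intros v [[Bv Cv] [Av|Dv]]; eauto. }
  assert (H2 : vSk adj k (vsetI B D, vsetU A C)).
  { split; simpl. apply sep_meet; [apply HvAB | apply sep_sym; apply HvCD].
    eapply card_sub; [exact HX|]. unfold vsetI, vsetU; intros v [[Bv Dv] [Av|Cv]]; eauto. }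
  assert (H3 : card_lt (vsetI B (vsetI (vsetU A D) (vsetU A C))) k).
  { eapply card_sub; [exact HX|]. unfold vsetI, vsetU;
    intros v [Bv [[Av|Dv] [Av'|Cv]]]; eauto. }
  assert (Hsub : forall v, vsetU A C v -> vsetI B D v -> X v).
  { unfold vsetI, vsetU; intros v [Av|Cv] [Bv Dv]; eauto. }
  assert (Hres : tau (vsetU A C, vsetI B D)).
  { destruct (Ho2 _ H2) as [[Hin|Hin] _]; [|exact Hin].
    destruct (Ho2 _ H1) as [[Hin2|Hin2] _].
    - exfalso; apply (Hav A B C D HvAB HvCD H1 H2 H3); auto.
    - exfalso. unfold inv in Hin2; simpl in Hin2.
      destruct (classic ((D, C) = (vsetU A D, vsetI B C))) as [E|NE].
      { rewrite <- E in Hin2. apply (no_self C D); auto. }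
      destruct (classic ((D, C) = (vsetI B C, vsetU A D))) as [E2|NE2].
      { injection E2; intros EC ED.
        assert (E3 : (vsetI B D, vsetU A C) = (D, C)).
        { f_equal; apply ext_set; intro v; unfold vsetI, vsetU; split.
          - tauto.
          - intro Dv. split; auto. rewrite ED in Dv; destruct Dv; auto.
          - intros [Av|Cv]; auto. rewrite EC; left; auto.
          - auto. }
        rewrite E3 in Hin. apply (no_self C D); auto. }
      apply Hcons. exists (D, C), (vsetU A D, vsetI B C).
      split; [apply (vSk_inv (C, D)); auto|].
      split; [apply (vSk_inv (_, _) H1)|].
      split; [split; auto|].
      split; [split; auto; split; simpl; unfold vsubset, vsetU, vsetI; [auto | tauto]|].
      split; auto. }
  split; [exact Hres|]. split; [apply (vSk_inv (_, _) H2)| exact Hsub].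
Qed.

Lemma reach_notX X x y : reach adj X x y -> ~ X x.
Proof. induction 1; auto. Qed.

Section Main.
Variable X : vset V.
Hypothesis HX : card_lt X k.
Hypothesis Hnp : forall K, component adj X K -> ~ tau (vsetC K, vsetU K X).

Lemma comp_tau z : tau (vsetU (reach adj X z) X, vsetC (reach adj X z)).
Proof.
  set (K := reach adj X z).
  destruct Htang as [[Ho1 Ho2] _].
  assert (Hv : vSk adj k (vsetC K, vsetU K X)).
  { split; simpl.
    - split.
      + intro v; unfold vsetC, vsetU; destruct (classic (K v)); tauto.
      + unfold vsetC, vsetU; intros u v nKu Hu Hv nv.
        assert (Kv : K v) by (destruct Hv; tauto).
        assert (nXu : ~ X u) by tauto.
        split; intro Ha.
        * apply nKu. apply reach_step with v; auto.
        * apply nKu. apply reach_step with v; auto.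
    - eapply card_sub; [exact HX|]. unfold vsetI, vsetC, vsetU; intros v [nK [Kv|Xv]]; tauto. }
  destruct (Ho2 _ Hv) as [[Hin|Hin] _]; [|exact Hin].
  exfalso. destruct (classic (X z)) as [Xz|nXz].
  - assert (E : vsetC K = (@vsetT V)).
    { apply ext_set; intro v; unfold vsetC, vsetT; split; auto.
      intros _ Kv. apply (reach_notX _ _ _ Kv Xz). }
    rewrite E in Hin. apply (Hreg _ Hin).
  - apply (Hnp K); auto. exists z; split; auto. intro; unfold K; tauto.
Qed.

Fixpoint U1 (l : list V) : vset V := match l with
  | [] => X | z :: l => vsetU (U1 l) (vsetU (reach adj X z) X) end.
Fixpoint W1 (l : list V) : vset V := match l with
  | [] => (@vsetT V) | z :: l => vsetI (W1 l) (vsetC (reach adj X z)) end.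

Lemma P1 l : tau (U1 l, W1 l) /\ vSk adj k (U1 l, W1 l) /\ (forall v, U1 l v -> W1 l v -> X v).
Proof.
  induction l as [|z l [IH1 [IH2 IH3]]]; simpl.
  - destruct Htang as [[Ho1 Ho2] _].
    assert (Hv : vSk adj k (X, (@vsetT V))).
    { split; simpl.
      - split. intro v; right; exact I. intros u v _ H _ _; exfalso; apply H; exact I.
      - eapply card_sub; [exact HX|]. intros v [? ?]; auto. }
    split; [|split; auto].
    destruct (Ho2 _ Hv) as [[Hin|Hin] _]; auto. exfalso; apply (Hreg _ Hin).
  - apply sup; auto.
    + exact (proj1 (proj1 Htang) _ (comp_tau z)).
    + apply comp_tau.
    + unfold vsetU, vsetC; intros v _ [Kv|Xv] nK; tauto.
Qed.

Lemma W1_spec l v : W1 l v -> forall z, In z l -> ~ reach adj X z v.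
Proof. induction l as [|a l IH]; simpl; [tauto|].
  intros [Hw Hc] z [<-|Hz]; auto. Qed.

Lemma U1_X l v : X v -> U1 l v.
Proof. induction l; simpl; auto. intro; left; auto. Qed.

Lemma U1_in l z v : In z l -> reach adj X z v -> U1 l v.
Proof. induction l as [|a l IH]; simpl; [tauto|].
  intros [<-|Hz] Hr; [right; left; auto | left; auto]. Qed.

Variable sigma : osep V -> Prop.
Hypothesis HsigS : forall s, sigma s -> vSk adj k s.
Hypothesis Hstar : star adj sigma.
Hypothesis Hall : forall s, sigma s -> tau s.
Variable lz : list V.
Hypothesis Hlz : forall x, interior sigma x <-> In x lz.

Fixpoint U2 (l : list (osep V)) : vset V := match l with
  | [] => U1 lz | s :: l => vsetU (U2 l) (fst s) end.
Fixpoint W2 (l : list (osep V)) : vset V := match l with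
  | [] => W1 lz | s :: l => vsetI (W2 l) (snd s) end.

Lemma P2 l : (forall s, In s l -> sigma s) ->
  tau (U2 l, W2 l) /\ vSk adj k (U2 l, W2 l) /\ (forall v, U2 l v -> W2 l v -> X v)
  /\ (forall v, W2 l v -> W1 lz v).
Proof.
  induction l as [|s l IH]; intro Hs; simpl.
  - destruct (P1 lz) as [? [? ?]]; auto.
  - destruct IH as [IH1 [IH2 [IH3 IH4]]]. { intros; apply Hs; simpl; auto. }
    assert (Ss : sigma s) by (apply Hs; simpl; auto).
    destruct s as [C D]; simpl.
    destruct (sup X (U2 l) (W2 l) C D) as [R1 [R2 R3]]; auto.
    + intros v Wv Cv Dv. destruct (classic (X v)) as [Xv|nXv]; auto.
      exfalso.
      assert (Iv : interior sigma v).
      { intros s' Hs'. destruct (classic (s' = (C, D))) as [E|NE].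
        - subst; auto.
        - destruct Hstar as [_ [_ Hst]].
          destruct (Hst (C, D) s' Ss Hs') as [Hle _]; auto.
          apply Hle; auto. }
      apply Hlz in Iv.
      apply (W1_spec lz v (IH4 v Wv) v Iv). constructor; auto.
    + split; auto. split; auto. split; auto.
      intros v [Wv _]; auto.
Qed.

Lemma U2_U1 l v : U1 lz v -> U2 l v.
Proof. induction l; simpl; auto. intro; left; auto. Qed.
Lemma U2_in l s v : In s l -> fst s v -> U2 l v.
Proof. induction l as [|a l IH]; simpl; [tauto|].
  intros [<-|Hz] Hr; [right; auto | left; auto]. Qed.

End Main.
End Proof.

Theorem lemma2p4 (V : Type) (adj : V -> V -> Prop)
  (adj_sym : forall u v, adj u v -> adj v u)
  (adj_irr : forall v, ~ adj v v)
  (k : nat) (tau : osep V -> Prop) (sigma : osep V -> Prop) :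
  P'k_tangle adj k tau -> regular tau -> ~ principal adj k tau ->
  (forall s, sigma s -> vSk adj k s) ->
  star adj sigma -> finite_set sigma -> finite_set (interior sigma) ->
  ~ (forall s, sigma s -> tau s).
Proof.
  intros Htang Hreg Hnp HsigS Hstar [ls Hls] [lz Hlz] Hall.
  assert (HXe : exists X, card_lt X k /\
     forall K, component adj X K -> ~ tau (vsetC K, vsetU K X)).
  { apply NNPP; intro Hn. apply Hnp. intros X HX.
    apply NNPP; intro Hn2. apply Hn. exists X; split; auto.
    intros K HK Ht. apply Hn2. exists K; auto. }
  destruct HXe as [X [HX Hnp']].
  destruct (P2 V adj adj_sym k tau Htang Hreg X HX Hnp' sigma HsigS Hstar Hall lz
              (fun x => Hlz x) ls) as [R1 _].
  { intros s Hs; apply Hls; auto. }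
  assert (E : U2 V adj X lz ls = (@vsetT V)).
  { apply ext_set; intro v; unfold vsetT; split; auto. intros _.
    destruct (classic (X v)) as [Xv|nXv].
    - apply U2_U1. apply U1_X; auto.
    - destruct (classic (interior sigma v)) as [Iv|nIv].
      + apply U2_U1. apply U1_in with v. apply Hlz; auto. constructor; auto.
      + apply not_all_ex_not in nIv. destruct nIv as [s Hs].
        apply imply_to_and in Hs. destruct Hs as [Ss nSv].
        apply U2_in with s. apply Hls; auto.
        destruct (HsigS s Ss) as [[c _] _]. destruct (c v); tauto. }
  rewrite E in R1. apply (Hreg _ R1).
Qed.
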